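(* Let $G$ be a graph that has a min-max clique covering with simple intersection, and suppose its compressed cliques graph $\mathcal{C}(G)$ has no induced cycles other than $K_3$ (i.e., no induced cycles of length at least $4$). Then $Z_+(G)=|V(G)|-\operatorname{cc}(G)$.
   Context: A clique covering of a graph is a set of cliques such that every edge lies in at least one of them; $\operatorname{cc}(G)$ is its minimum size. A min-max clique covering is a clique covering of size $\operatorname{cc}(G)$ consisting of maximal cliques; it has simple intersection if no three distinct cliques of it share a vertex. Given such a covering $\{C_1,\dots,C_\ell\}$, put $C_{i,j}=C_i\cap C_j$ ($i\ne j$) and $C_{i,i}=C_i\setminus\bigcup_{j\ne i}C_j$; the compressed cliques graph $\mathcal{C}(G)$ has a vertex $v_{i,j}$ for each non-empty $C_{i,j}$ (including $i=j$), with $v_{i,j}\sim v_{i',j'}$ iff $\{i,j\}\cap\{i',j'\}\ne\emptyset$. $Z_+(G)$ is the positive zero forcing number: the minimum size of a set $B$ of initially black vertices such that repeated application of the rule ''let $W_1,\dots,W_k$ be the vertex sets of components of $G$ minus the black vertices; a black vertex $u$ whose only white neighbour in the subgraph induced by $W_i\cup(\text{black vertices})$ is $w$ may turn $w$ black'' eventually makes all vertices black. *)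

(* Defs.v *)
(* A simple graph is a symmetric irreflexive relation e on a finType T. *)
From mathcomp Require Import all_boot all_order all_algebra.
Set Implicit Arguments. Unset Strict Implicit. Unset Printing Implicit Defensive.

Section Defs.
Variable T : finType.
Variable e : rel T.

Definition clique (K : {set T}) : bool :=
  [forall x in K, forall y in K, (x != y) ==> e x y].

Definition maximal_clique (K : {set T}) : bool := maxset clique K.

Definition clique_covering (F : {set {set T}}) : bool :=
  [forall K in F, clique K] &&
  [forall x, forall y, e x y ==> [exists K in F, (x \in K) && (y \in K)]].

(* cc(G): minimum size of a clique covering.  (Every F has #|F| <= #|{set T}|,
   so #|{set T}| is a neutral upper bound for the minimum.) *)
Definition cc : nat :=
  \big[minn/#|{set T}|]_(F : {set {set T}} | clique_covering F) #|F|.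

Definition minmax_clique_covering (F : {set {set T}}) : bool :=
  [&& clique_covering F, #|F| == cc & [forall K in F, maximal_clique K]].

Definition simple_intersection (F : {set {set T}}) : bool :=
  [forall x, #|[set K in F | x \in K]| <= 2].

(* A vertex v_{i,j} is represented by
   the set P = {C_i, C_j} of cliques of F (a singleton when i = j). *)
Definition ccg_part (F : {set {set T}}) (P : {set {set T}}) : {set T} :=
  if #|P| == 1 then (\bigcap_(A in P) A) :\: \bigcup_(B in F :\: P) B
  else \bigcap_(A in P) A.

Definition ccg_vertex (F : {set {set T}}) (P : {set {set T}}) : bool :=
  [&& P \subset F, 0 < #|P| <= 2 & ccg_part F P != set0].

Definition ccg_adj (P Q : {set {set T}}) : bool := (P != Q) && (P :&: Q != set0).

(* adjacency among white (non-black) vertices; its connected components are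
   the components W_i of G - B *)
Definition white_rel (B : {set T}) : rel T :=
  [rel x y | [&& e x y, x \notin B & y \notin B]].

Definition pzf_force (B : {set T}) (u w : T) : bool :=
  [&& u \in B, w \notin B, e u w &
      [forall w', ([&& w' \notin B, e u w' & connect (white_rel B) w w'])
                  ==> (w' == w)]].

Inductive pzf_derives : {set T} -> Prop :=
  | pzf_done B : B = setT -> pzf_derives B
  | pzf_step B u w : pzf_force B u w -> pzf_derives (w |: B) -> pzf_derives B.

Definition pzf_set (B : {set T}) : Prop := pzf_derives B.

Definition Zplus_is (k : int) : Prop :=
  (exists B, pzf_set B /\ (#|B|%:Z = k)%R) /\
  (forall B, pzf_set B -> (k <= #|B|%:Z)%R).
End Defs.

Definition has_induced_long_cycle (V : finType) (vert : pred V) (adj : rel V) : Prop :=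
  exists (k : nat) (c : 'I_k -> V),
    [/\ 4 <= k, injective c, (forall a, vert (c a)) &
        (forall a b : 'I_k, adj (c a) (c b) = (val b == (val a).+1 %% k) || (val a == (val b).+1 %% k))].

(* Main.v *)
Require Import Defs.
From mathcomp Require Import all_boot all_order all_algebra zify.
Set Implicit Arguments. Unset Strict Implicit. Unset Printing Implicit Defensive.

Section Main.
Variable T : finType.
Variable e : rel T.
Hypothesis e_sym : symmetric e.
Hypothesis e_irr : irreflexive e.
Variable F : {set {set T}}.
Hypothesis HF : minmax_clique_covering e F.
Hypothesis Hsimple : simple_intersection F.
Hypothesis Hcyc : ~ has_induced_long_cycle (ccg_vertex F) (@ccg_adj T).

Lemma cliqueP (K : {set T}) x y : clique e K -> x \in K -> y \in K -> x != y -> e x y.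
Proof. by move=> /forallP /(_ x) /implyP Hx xK yK; move: (Hx xK) => /forallP /(_ y) /implyP /(_ yK) /implyP. Qed.

Lemma covF : clique_covering e F.
Proof. by case/and3P: HF. Qed.

Lemma Fclique K : K \in F -> clique e K.
Proof. by case/andP: covF => /forallP H _ KF; exact: (implyP (H K)). Qed.

Lemma Fcover x y : e x y -> exists2 K, K \in F & (x \in K) && (y \in K).
Proof.
case/andP: covF => _ /forallP /(_ x) /forallP /(_ y) /implyP H /H.
by case/existsP => K /andP [KF H2]; exists K.
Qed.

Lemma Fmax K : K \in F -> forall B, clique e B -> K \subset B -> B = K.
Proof.
case/and3P: HF => _ _ /forallP H KF; move: (implyP (H K) KF).
by rewrite /maximal_clique => /maxsetP [_].
Qed.

Lemma ccF : cc e = #|F|.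
Proof. by case/and3P: HF => _ /eqP. Qed.

Lemma three x A B C : A \in F -> B \in F -> C \in F -> A != B -> B != C -> A != C ->
  x \in A -> x \in B -> x \in C -> False.
Proof.
move=> AF BF CF AB BC AC xA xB xC.
move: Hsimple => /forallP /(_ x).
have sub : A |: (B |: [set C]) \subset [set K in F | x \in K].
  by apply/subsetP => K; rewrite !inE => /or3P [] /eqP ->; rewrite ?AF ?BF ?CF ?xA ?xB ?xC.
move: (subset_leq_card sub); rewrite !cardsU1 cards1 !inE negb_or AB AC BC /=.
by move=> H1 H2; have := leq_trans H1 H2.
Qed.

Lemma cc_le (F' : {set {set T}}) : clique_covering e F' -> cc e <= #|F'|.
Proof.
move=> H; rewrite /cc -minEnat.
have := Order.TotalTheory.bigmin_le_cond #|{set T}| (fun F0 : {set {set T}} => #|F0|) (P := clique_covering e) H.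
done.
Qed.

Lemma card2 K : K \in F -> 1 < #|K|.
Proof.
move=> KF; rewrite ltnNge; apply/negP => Hle.
have cov : clique_covering e (F :\ K).
  apply/andP; split.
    apply/forallP => K'; apply/implyP; rewrite !inE => /andP [_]; exact: Fclique.
  apply/forallP => x; apply/forallP => y; apply/implyP => exy.
  case: (Fcover exy) => K' K'F /andP [xK yK].
  apply/existsP; exists K'; rewrite !inE K'F xK yK !andbT.
  apply/eqP => E; subst K'.
  have : 1 < #|K|.
    have xy : x != y by apply/eqP => E; subst y; rewrite e_irr in exy.
    apply: (leq_trans _ (subset_leq_card (_ : [set x; y] \subset K))).
      by rewrite cards2 xy.
    by apply/subsetP => z; rewrite !inE => /orP [] /eqP ->.
  by rewrite ltnNge Hle.
have := cc_le cov; rewrite ccF (cardsD1 K F) KF.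
by rewrite add1n ltnn.
Qed.

Definition Mset (B : {set T}) := [set K in F | ~~ (K \subset B)].

Lemma lower_aux B : pzf_derives e B -> #|~: B| <= #|Mset B|.
Proof.
elim=> [B0 -> | B0 u w Hf _ IH]; first by rewrite setCT cards0.
case/and4P: Hf => uB wB euw /forallP Hw.
have E1 : #|~: B0| = #|~: (w |: B0)|.+1.
  rewrite setCU (cardsD1 w (~: B0)) inE wB add1n.
  congr _.+1; apply: eq_card => z; rewrite !inE; by rewrite andbC.
case: (Fcover euw) => K0 K0F /andP [uK0 wK0].
have Hprop : Mset (w |: B0) \proper Mset B0.
  apply/properP; split.
    apply/subsetP => K; rewrite !inE => /andP [-> H]; apply: contra H => H.
    exact: (subset_trans H (subsetUr _ _)).
  exists K0; rewrite !inE K0F.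
    by apply/negP => /subsetP /(_ w wK0); rewrite (negbTE wB).
  rewrite negbK; apply/subsetP => x xK0; rewrite inE.
  rewrite inE.
  case: (eqVneq x w) => [//|xw] /=; apply/negPn/negP => xB.
  have ux : u != x by apply/eqP => E; subst x; rewrite uB in xB.
  have eux : e u x by apply: (cliqueP (Fclique K0F)).
  have ewx : e w x by apply: (cliqueP (Fclique K0F)) => //; rewrite eq_sym.
  have := implyP (Hw x); rewrite xB eux /=.
  have -> : connect (white_rel e B0) w x.
    by apply: connect1; apply/and3P.
  by move=> /(_ isT) /eqP E; rewrite E eqxx in xw.
rewrite E1; apply: (leq_ltn_trans IH); exact: proper_card.
Qed.

Lemma lower B : pzf_derives e B -> #|T| - cc e <= #|B|.
Proof.
move=> H; have := lower_aux H.
have : #|Mset B| <= #|F| by apply: subset_leq_card; apply/subsetP => K; rewrite inE => /andP [].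
rewrite ccF -(cardsC B); lia.
Qed.

Lemma nxE k i : i < k -> i.+1 %% k = if i.+1 == k then 0 else i.+1.
Proof.
move=> ik; case: eqP => [->|ne]; first by rewrite modnn.
by rewrite modn_small //; lia.
Qed.

Lemma modS_cases k i : i < k -> (i.+1 %% k = i.+1 /\ i.+1 < k) \/ (i.+1 %% k = 0 /\ i.+1 = k).
Proof.
move=> ik; case: (ltngtP i.+1 k) => H; [left|lia|right]; last by rewrite H modnn.
by rewrite modn_small.
Qed.

Lemma cycle_contra (cs : seq {set T}) : uniq cs -> {subset cs <= F} -> 4 <= size cs ->
  (forall i, i < size cs -> nth set0 cs i :&: nth set0 cs (i.+1 %% size cs) != set0) -> False.
Proof.
move=> Hu Hs Hk Hadj; apply: Hcyc.
set k := size cs in Hk Hadj *.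
pose X i := nth set0 cs i.
have Xinj i j : i < k -> j < k -> X i = X j -> i = j.
  by move=> ik jk /eqP; rewrite nth_uniq // => /eqP.
have nxlt i : i.+1 %% k < k by rewrite ltn_pmod //; lia.
pose c := fun a : 'I_k => [set X a; X (a.+1 %% k)].
have memc i j Y : i < k -> j < k -> Y \in [set X i; X (i.+1 %% k)] -> Y \in [set X j; X (j.+1 %% k)] ->
   [\/ i = j, i = j.+1 %% k, i.+1 %% k = j | i.+1 %% k = j.+1 %% k].
  move=> ik jk; rewrite !inE => /orP [] /eqP -> /orP [] /eqP /Xinj H.
  - by constructor 1; apply: H.
  - by constructor 2; apply: H.
  - by constructor 3; apply: H.
  - by constructor 4; apply: H.
have memc1 m j : m < k -> j < k -> X m \in [set X j; X (j.+1 %% k)] -> m = j \/ m = j.+1 %% k.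
  move=> mk jk; rewrite !inE => /orP [] /eqP /Xinj H; [left|right]; apply: H => //.
have cinj : injective c.
  move=> a b cab; apply: val_inj => /=.
  have ak := ltn_ord a; have bk := ltn_ord b.
  have H1 : X a \in [set X b; X (b.+1 %% k)] by rewrite -/(c b) -cab !inE eqxx.
  have H2 : X (a.+1 %% k) \in [set X b; X (b.+1 %% k)] by rewrite -/(c b) -cab !inE eqxx orbT.
  have I1 : X a \in [set X a; X (a.+1 %% k)] by rewrite !inE eqxx.
  have I2 : X (a.+1 %% k) \in [set X a; X (a.+1 %% k)] by rewrite !inE eqxx orbT.
  have Ha := memc1 a b ak bk H1.
  have Hb := memc1 _ b (nxlt a) bk H2.
  case: Ha => [//|Ha]; case: (modS_cases ak) => [[Ea La]|[Ea La]]; case: (modS_cases bk) => [[Eb Lb]|[Eb Lb]];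
    rewrite ?Ea ?Eb in Ha Hb; case: Hb => Hb; clear -Ha Hb La Lb ak bk Hk; lia.
exists k, c; split => //.
- move=> a; have ak := ltn_ord a.
  have ne : X a != X (a.+1 %% k).
    apply/eqP => /Xinj; case: (modS_cases ak) => [[-> La]|[-> La]]; lia.
  apply/and3P; split.
  + apply/subsetP => Y; rewrite !inE => /orP [] /eqP ->; apply: Hs; apply: mem_nth => //.
  + by rewrite cards2 ne.
  + rewrite /ccg_part cards2 ne /=.
    case/set0Pn: (Hadj a ak) => z zI; apply/set0Pn; exists z.
    by apply/bigcapP => Y; rewrite !inE => /orP [] /eqP ->; move: zI; rewrite inE => /andP [].
- move=> a b; have ak := ltn_ord a; have bk := ltn_ord b.
  change (ccg_adj (c a) (c b) = (nat_of_ord b == (nat_of_ord a).+1 %% k) || (nat_of_ord a == (nat_of_ord b).+1 %% k)).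
  rewrite /ccg_adj; apply/idP/idP.
  + case/andP => neq /set0Pn [Y]; rewrite inE => /andP [Ha Hb].
    have neq' : nat_of_ord a != nat_of_ord b.
      by apply: contra neq => /eqP E; apply/eqP; congr c; apply: val_inj.
    case: (memc a b Y ak bk Ha Hb) => H.
    * by move: neq'; rewrite H eqxx.
    * by rewrite H eqxx orbT.
    * by rewrite H eqxx.
    * move: neq' H; case: (modS_cases ak) => [[-> La]|[-> La]]; case: (modS_cases bk) => [[-> Lb]|[-> Lb]]; lia.
  + have ne_ab : nat_of_ord b = (nat_of_ord a).+1 %% k \/ nat_of_ord a = (nat_of_ord b).+1 %% k -> c a != c b.
      move=> H; apply/negP => /eqP /cinj E; subst b.
      by case: H; case: (modS_cases ak) => [[-> La]|[-> La]]; lia.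
    case/orP => /eqP H; rewrite ne_ab; (try by [left | right]); apply/set0Pn.
    * by exists (X b); rewrite !inE H !eqxx !orbT.
    * by exists (X a); rewrite !inE H !eqxx !orbT.
Qed.

Definition hadj (A B : {set T}) : bool := (A != B) && (A :&: B != set0).
Definition relH (S : {set {set T}}) : rel {set T} := fun A B => [&& A \in S, B \in S & hadj A B].
Definition inter : rel {set T} := fun A B => A :&: B != set0.

Lemma hadj_sym A B : hadj A B = hadj B A.
Proof. by rewrite /hadj eq_sym setIC. Qed.

Lemma relH_sym S : symmetric (relH S).
Proof. by move=> A B; rewrite /relH hadj_sym andbCA. Qed.

Lemma relH_inter S : subrel (relH S) inter.
Proof. by move=> A B /and3P [_ _ /andP []]. Qed.

Definition Inv (P : {set {set T}}) : Prop := P \subset F /\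
  forall p q, p \in P -> q \in P -> connect (relH F) p q -> connect (relH P) p q.

Lemma path_in S x s : path (relH S) x s -> all (mem S) s.
Proof. by elim: s x => //= y s IH x /andP [/and3P [_ yS _] /IH ->]; rewrite andbT. Qed.

Lemma path_cyc (x : {set T}) s : path inter x s -> last x s :&: x != set0 ->
  forall i, i < size (x::s) -> nth set0 (x::s) i :&: nth set0 (x::s) (i.+1 %% size (x::s)) != set0.
Proof.
move=> Hp Hl i; rewrite /= ltnS leq_eqVlt => /orP [/eqP -> | lt].
  by rewrite modnn /= -(last_nth set0 x s).
rewrite modn_small ?ltnS //.
by move/pathP: Hp => /(_ set0 i lt).
Qed.

Lemma cross (r : rel {set T}) (P : {set {set T}}) x y : connect r x y -> x \in P -> y \notin P ->
  exists a b, [/\ a \in P, b \notin P & r a b].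
Proof.
case/connectP => s; elim: s x => [|z s IH] x /=; first by move=> _ -> ->.
case/andP => rxz pzs ly xP yP.
case: (boolP (z \in P)) => zP; first exact: (IH z pzs ly zP yP).
by exists x, z.
Qed.

Lemma maxcover K (N : {set {set T}}) : K \in F -> N \subset F -> K \notin N ->
  (forall q1 q2, q1 \in N -> q2 \in N -> q1 != q2 -> q1 :&: q2 != set0) ->
  (forall q1 q2 q3, q1 \in N -> q2 \in N -> q3 \in N -> q1 != q2 -> q2 != q3 -> q1 != q3 -> False) ->
  ~ (K \subset \bigcup_(q in N) q).
Proof.
move=> KF NF KN Hpair Hno3 Hsub.
have inN q : q \in N -> q \in F := subsetP NF q.
have cover y : y \in K -> exists2 q, q \in N & y \in q.
  by move=> yK; move: (subsetP Hsub y yK) => /bigcupP.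
have /set0Pn [y0 y0K] : K != set0 by rewrite -card_gt0; apply: ltnW (card2 KF).
case: (cover y0 y0K) => q1 q1N y0q1.
have : ~~ (K \subset q1).
  apply/negP => sub; have := Fmax KF (Fclique (inN _ q1N)) sub.
  by move=> E; rewrite -E q1N in KN.
case/subsetPn => y1 y1K y1q1.
case: (cover y1 y1K) => q2 q2N y1q2.
have q12 : q1 != q2 by apply: contraNneq y1q1 => ->.
case/set0Pn: (Hpair q1 q2 q1N q2N q12) => z; rewrite inE => /andP [zq1 zq2].
have Kq1 : K != q1 by apply: contraNneq KN => ->.
have Kq2 : K != q2 by apply: contraNneq KN => ->.
have zK : z \notin K.
  apply/negP => zK; apply: (three (inN _ q1N) KF (inN _ q2N) _ Kq2 q12 zq1 zK zq2).
  by rewrite eq_sym.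
have hz b : b \in K -> e z b.
  move=> bK; case: (cover b bK) => q qN bq.
  have zq : z \in q.
    case: (eqVneq q q1) => [->//|qq1]; case: (eqVneq q q2) => [->//|qq2].
    by case: (Hno3 q1 q2 q q1N q2N qN q12); rewrite eq_sym.
  apply: (cliqueP (Fclique (inN _ qN)) zq bq).
  by apply: contraNneq zK => ->.
have clq : clique e (z |: K).
  apply/forallP => a; apply/implyP => aK; apply/forallP => b; apply/implyP => bK; apply/implyP => ab.
  move: aK bK ab; rewrite !inE => /orP [/eqP -> | aK] /orP [/eqP -> | bK] ab.
  - by rewrite eqxx in ab.
  - by apply: hz.
  - by rewrite e_sym; apply: hz.
  - exact: (cliqueP (Fclique KF)).
have := Fmax KF clq (subsetUr _ _) => E.
by move: zK; rewrite -E !inE eqxx.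
Qed.

Lemma ar0 a b : b - a <= 0 -> a.+2 <= b -> False.
Proof. lia. Qed.
Lemma ar1 a b n : b - a <= n.+1 -> a.+2 <= b -> b - a.+1 <= n.
Proof. lia. Qed.

Lemma chain_size (R : {set {set T}}) y t : y \in R -> path (relH R) y t -> uniq (y::t) -> size (y::t) <= #|R|.
Proof.
move=> yR Hp Hu; rewrite cardE; apply: uniq_leq_size => // a.
rewrite inE mem_enum => /orP [/eqP -> //| aT].
by move/allP: (path_in Hp) => /(_ a aT).
Qed.

Lemma longest (R : {set {set T}}) y0 : y0 \in R -> exists y t,
  [/\ y \in R, path (relH R) y t, uniq (y :: t) & forall z, z \in R -> hadj y z -> z \in t].
Proof.
move=> y0R.
suff H : forall n y t, #|R| - size t <= n -> y \in R -> path (relH R) y t -> uniq (y::t) ->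
  exists y t, [/\ y \in R, path (relH R) y t, uniq (y :: t) & forall z, z \in R -> hadj y z -> z \in t].
  by apply: (H #|R| y0 [::]) => //; rewrite subn0.
elim=> [|n IH] y t Hn yR Hp Hu;
  case: (boolP [exists z, [&& z \in R, hadj y z & z \notin t]]) =>
    [/existsP [z /and3P [zR hyz zt]] | /existsPn Hno].
- have zy : z != y by move: hyz; rewrite /hadj eq_sym => /andP [].
  have Hp' : path (relH R) z (y::t) by rewrite /= Hp andbT /relH zR yR hadj_sym hyz.
  have Hu' : uniq (z :: y :: t) by rewrite /= inE negb_or zy zt.
  have := chain_size zR Hp' Hu'; move: Hn => /= H1 H2; case: (ar0 H1 H2).
- exists y, t; split => // z zR hyz; move: (Hno z); by rewrite zR hyz /= negbK.
- have zy : z != y by move: hyz; rewrite /hadj eq_sym => /andP [].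
  have Hp' : path (relH R) z (y::t) by rewrite /= Hp andbT /relH zR yR hadj_sym hyz.
  have Hu' : uniq (z :: y :: t) by rewrite /= inE negb_or zy zt.
  apply: (IH z (y::t)) => //.
  have := chain_size zR Hp' Hu'; move: Hn => /= H1 H2; exact: (ar1 H1 H2).
- exists y, t; split => // z zR hyz; move: (Hno z); by rewrite zR hyz /= negbK.
Qed.

Lemma Inv_mono (P : {set {set T}}) K x y : connect (relH P) x y -> connect (relH (K |: P)) x y.
Proof.
apply: connect_sub => a b /and3P [aP bP h]; apply: connect1.
by rewrite /relH !inE aP bP h !orbT.
Qed.

Lemma relHF_sym x y : connect (relH F) x y = connect (relH F) y x.
Proof. by rewrite (sym_connect_sym (@relH_sym F)). Qed.

Definition stepOK (P : {set {set T}}) K u w : Prop :=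
  [/\ K \in F, K \notin P, u \in K, w \in K & u != w] /\
  [/\ (forall p, p \in P -> w \notin p), (forall K', K' \in F -> u \in K' -> K' \in K |: P) & Inv (K |: P)].

Lemma step_case1 P K p0 : Inv P -> K \in F -> K \notin P -> p0 \in P -> hadj K p0 ->
  exists u w, stepOK P K u w.
Proof.
move=> [PF HI] KF KP p0P hKp0.
have p0F : p0 \in F := subsetP PF _ p0P.
have pair q1 q2 : q1 \in P -> q2 \in P -> hadj K q1 -> hadj K q2 -> q1 != q2 -> q1 :&: q2 != set0.
  move=> q1P q2P h1 h2 q12.
  have q1F := subsetP PF _ q1P; have q2F := subsetP PF _ q2P.
  have c12 : connect (relH F) q1 q2.
    apply: (connect_trans (y:=K)); apply: connect1; rewrite /relH.
      by rewrite q1F KF hadj_sym h1.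
    by rewrite q2F KF h2.
  case/connectP: (HI q1 q2 q1P q2P c12) => s Hp Hl.
  move: Hl; case: (shortenP Hp) => s' Hp' Hu' _ Hl.
  move: Hp' Hu' Hl; case: s' => [|y1 [|y2 s'']].
  - by move=> _ _ /= E; rewrite E eqxx in q12.
  - by move=> /=; rewrite andbT => /relH_inter H _ ->.
  - move=> Hp' Hu' Hl; exfalso.
    have allP' := path_in Hp'.
    apply: (cycle_contra (cs := K :: q1 :: y1 :: y2 :: s'')).
    + rewrite /= in Hu' *; rewrite Hu' andbT.
      rewrite !inE negb_or; apply/andP; split.
        by apply: contraNneq KP => ->.
      apply/negP => KIn; move/allP: allP' => /(_ K KIn); by rewrite /= (negbTE KP).
    + move=> X; rewrite inE => /orP [/eqP -> //|XIn].
      rewrite inE in XIn; case/orP: XIn => [/eqP -> //|XIn].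
      by apply: (subsetP PF); move/allP: allP' => /(_ X XIn).
    + by [].
    + apply: path_cyc.
        have Hi := sub_path (@relH_inter P) Hp'; rewrite /= in Hi *.
        by rewrite Hi andbT; case/andP: h1.
      by rewrite /= in Hl; rewrite /= -Hl setIC; case/andP: h2.
have no3 q1 q2 q3 : q1 \in P -> q2 \in P -> q3 \in P -> hadj K q1 -> hadj K q2 -> hadj K q3 ->
    q1 != q2 -> q2 != q3 -> q1 != q3 -> False.
  move=> q1P q2P q3P h1 h2 h3 q12 q23 q13.
  apply: (cycle_contra (cs := [:: K; q1; q3; q2])).
  - have Kq q : q \in P -> K != q by move=> qP; apply: contraNneq KP => ->.
    by rewrite /= !inE !negb_or !Kq // q13 q12 (eq_sym q3) q23.
  - move=> X; rewrite !inE => /or4P [] /eqP ->; rewrite ?KF //; exact: (subsetP PF).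
  - by [].
  - apply: path_cyc.
      rewrite /= andbT; apply/and3P; split.
      + by case/andP: h1.
      + exact: (pair q1 q3 q1P q3P h1 h3 q13).
      + by apply: (pair q3 q2 q3P q2P h3 h2); rewrite eq_sym.
    by rewrite /= setIC; case/andP: h2.
set N := [set q in P | hadj K q].
have NF : N \subset F by apply/subsetP => q; rewrite inE => /andP [/(subsetP PF)].
have KN : K \notin N by rewrite inE (negbTE KP).
have Kcov := maxcover KF NF KN.
have : ~~ (K \subset \bigcup_(q in N) q).
  apply/negP; apply: Kcov.
    by move=> q1 q2; rewrite !inE => /andP [q1P h1] /andP [q2P h2]; apply: pair.
  move=> q1 q2 q3; rewrite !inE => /andP [q1P h1] /andP [q2P h2] /andP [q3P h3].
  exact: no3.
case/subsetPn => w wK wN.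
have wP p : p \in P -> w \notin p.
  move=> pP; apply/negP => wp; move/negP: wN; apply; apply/bigcupP; exists p => //.
  rewrite inE pP /= /hadj; apply/andP; split; first by apply: contraNneq KP => ->.
  by apply/set0Pn; exists w; rewrite inE wK wp.
case/andP: (hKp0) => _ /set0Pn [u]; rewrite inE => /andP [uK up0].
exists u, w; split; split => //.
- by apply/eqP => E; move: (wP p0 p0P); rewrite -E up0.
- move=> K' K'F uK'; rewrite !inE.
  case: (eqVneq K' K) => [_|K'K] //; case: (boolP (K' \in P)) => [_|K'P]; rewrite ?orbT //.
  have Kp0 : K != p0 by apply: contraNneq KP => ->.
  have p0K' : p0 != K' by apply/eqP => E; rewrite -E p0P in K'P.
  have KK' : K != K' by rewrite eq_sym.
  by case: (three KF p0F K'F Kp0 p0K' KK' uK up0 uK').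
- split.
    by apply/subsetP => X; rewrite !inE => /orP [/eqP -> //|/(subsetP PF)].
  have Kq q : q \in P -> connect (relH F) K q -> connect (relH (K |: P)) K q.
    move=> qP cKq.
    have cp0q : connect (relH F) p0 q.
      apply: (connect_trans (y:=K)) => //; apply: connect1.
      by rewrite /relH p0F KF hadj_sym.
    apply: (connect_trans (y:=p0)).
      by apply: connect1; rewrite /relH !inE eqxx p0P orbT hKp0.
    exact: Inv_mono (HI _ _ p0P qP cp0q).
  move=> p q; rewrite !inE => /orP [/eqP -> | pP] /orP [/eqP -> | qP] cpq.
  + exact: connect0.
  + exact: Kq.
  + rewrite (sym_connect_sym (@relH_sym _)); apply: Kq => //; by rewrite relHF_sym.
  + exact: Inv_mono (HI _ _ pP qP cpq).
Qed.

Lemma step_case2 P : Inv P -> (forall K p, K \in F :\: P -> p \in P -> ~~ hadj K p) ->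
  F :\: P != set0 -> exists K u w, stepOK P K u w.
Proof.
move=> [PF HI] Hno /set0Pn [y0 y0R].
case: (longest y0R) => y [t [yR Hp Hu Hmax]].
have yF : y \in F by move: yR; rewrite inE => /andP [].
have yP : y \notin P by move: yR; rewrite inE => /andP [].
have tR : all (mem (F :\: P)) t := path_in Hp.
set N := [set q in F | hadj y q].
have NF : N \subset F by apply/subsetP => q; rewrite inE => /andP [].
have yN : y \notin N by rewrite inE /hadj eqxx /= andbF.
have Nt q : q \in N -> q \in t.
  rewrite inE => /andP [qF hq]; apply: Hmax (hq).
  rewrite inE qF andbT; apply/negP => qP.
  by move: (Hno y q yR qP); rewrite hq.
have Nidx q : q \in N -> index q t < 2.
  move=> qN; have qt := Nt q qN; rewrite ltnNge; apply/negP => Hj.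
  have jlt : index q t < size t by rewrite index_mem.
  set j := index q t in Hj jlt.
  apply: (cycle_contra (cs := y :: take j.+1 t)).
  - have yt : y \notin t by case/andP: Hu.
    rewrite /= take_uniq ?andbT; last by case/andP: Hu.
    by apply: contra yt; apply: mem_take.
  - move=> X; rewrite inE => /orP [/eqP -> //| /mem_take Xt].
    move/allP: tR => /(_ X Xt) H; move: (H : X \in F :\: P).
    by rewrite inE => /andP [].
  - by rewrite /= size_takel.
  - apply: path_cyc; first exact: (sub_path (@relH_inter _) (take_path _ Hp)).
    rewrite (last_nth set0) size_takel // /= nth_take // nth_index //.
    by move: qN; rewrite inE => /andP [_ /andP [_]]; rewrite setIC.
have Nval q : q \in N -> q = nth set0 t 0 \/ (q = nth set0 t 1 /\ 1 < size t).
  move=> qN; have qt := Nt q qN; have := Nidx q qN.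
  have jlt : index q t < size t by rewrite index_mem.
  have E := nth_index set0 qt.
  case: (index q t) E jlt => [|[|j]] E jlt //; [left | right] => //.
have t01 : 1 < size t -> nth set0 t 0 :&: nth set0 t 1 != set0.
  move=> H; move/pathP: Hp => /(_ set0 1 H) /(@relH_inter _).
  by [].
have Kcov := maxcover yF NF yN.
have : ~~ (y \subset \bigcup_(q in N) q).
  apply/negP; apply: Kcov.
    move=> q1 q2 q1N q2N q12.
    case: (Nval q1 q1N) => [E1|[E1 L1]]; case: (Nval q2 q2N) => [E2|[E2 L2]];
      move: q12; rewrite ?E1 ?E2 ?eqxx //.
      by move=> _; apply: t01.
    by move=> _; rewrite setIC; apply: t01.
  move=> q1 q2 q3 q1N q2N q3N.
  case: (Nval q1 q1N) => [E1|[E1 L1]]; case: (Nval q2 q2N) => [E2|[E2 L2]];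
    case: (Nval q3 q3N) => [E3|[E3 L3]]; rewrite ?E1 ?E2 ?E3 ?eqxx //.
case/subsetPn => u uy uN.
have : 0 < #|y :\ u|.
  by have := card2 yF; rewrite (cardsD1 u y) uy add1n ltnS.
rewrite card_gt0 => /set0Pn [w]; rewrite !inE => /andP [wu wy].
exists y, u, w; split; split => //.
- by rewrite eq_sym.
- move=> p pP; apply/negP => wp.
  have yp : y != p by apply: contraNneq yP => ->.
  move: (Hno y p yR pP); rewrite /hadj yp /=; apply/negP/negPn/set0Pn.
  by exists w; rewrite inE wy wp.
- move=> K' K'F uK'; rewrite !inE.
  case: (eqVneq K' y) => [_|K'y] //=.
  exfalso; move/negP: uN; apply; apply/bigcupP; exists K' => //.
  rewrite inE K'F /= /hadj eq_sym K'y /=; apply/set0Pn; exists u; by rewrite inE uy uK'.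
- split.
    by apply/subsetP => X; rewrite !inE => /orP [/eqP -> //|/(subsetP PF)].
  have noc q : q \in P -> connect (relH F) q y -> False.
    move=> qP cqy; case: (cross cqy qP yP) => a [b [aP bP /and3P [aF bF hab]]].
    have bR : b \in F :\: P by rewrite inE bP bF.
    by move: (Hno b a bR aP); rewrite hadj_sym hab.
  move=> p q; rewrite !inE => /orP [/eqP -> | pP] /orP [/eqP -> | qP] cpq.
  + exact: connect0.
  + by case: (noc q qP); rewrite relHF_sym.
  + by case: (noc p pP).
  + exact: Inv_mono (HI _ _ pP qP cpq).
Qed.

Lemma step P : Inv P -> F :\: P != set0 -> exists K u w, stepOK P K u w.
Proof.
move=> HI ne.
case: (boolP [exists K, [exists p, [&& K \in F :\: P, p \in P & hadj K p]]]) => [Hex|Hno].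
  case/existsP: Hex => K /existsP [p0 /and3P [KFP p0P hKp0]].
  move: KFP; rewrite inE => /andP [KP KF].
  case: (step_case1 HI KF KP p0P hKp0) => u [w H]; by exists K, u, w.
apply: step_case2 => // K p KR pP; apply/negP => h.
by move/existsPn: Hno => /(_ K) /existsPn /(_ p); rewrite KR pP h.
Qed.

Lemma ub n P : #|F :\: P| = n -> Inv P -> exists W : {set T},
  [/\ #|W| = n, (forall p x, p \in P -> x \in W -> x \notin p) & pzf_derives e (~: W)].
Proof.
elim: n P => [|n IH] P Hn HI.
  exists set0; split; first by rewrite cards0.
    by move=> p x _; rewrite inE.
  by constructor 1; rewrite setC0.
have ne : F :\: P != set0 by rewrite -card_gt0 Hn.
case: (step HI ne) => K [u [w [[KF KP uK wK uw] [wP uP HI']]]].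
have Hn' : #|F :\: (K |: P)| = n.
  have KR : K \in F :\: P by rewrite inE KP KF.
  move: Hn; rewrite (cardsD1 K (F :\: P)) KR add1n => [[<-]].
  apply: eq_card => X; rewrite !inE negb_or.
  by rewrite andbA.
case: (IH _ Hn' HI') => W' [cW' pW' dW'].
have KKP : K \in K |: P by rewrite setU11.
have wW' : w \notin W' by apply/negP => /(pW' K w KKP); rewrite wK.
exists (w |: W'); split.
- by rewrite cardsU1 wW' cW'.
- move=> p x pP; rewrite !inE => /orP [/eqP -> |xW]; first exact: wP.
  by apply: pW' => //; rewrite !inE pP orbT.
- apply: (pzf_step (u := u) (w := w)).
    apply/and4P; split.
    + rewrite !inE negb_or uw /=; apply/negP => /(pW' K u KKP).
      by rewrite uK.
    + by rewrite !inE eqxx.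
    + by apply: (cliqueP (Fclique KF)).
    + apply/forallP => w'; apply/implyP => /and3P [w'B euw' _].
      move: w'B; rewrite !inE negbK => /orP [//|w'W'].
      case: (Fcover euw') => K' K'F /andP [uK' w'K'].
      by move: (pW' K' w' (uP K' K'F uK') w'W'); rewrite w'K'.
  have -> : w |: ~: (w |: W') = ~: W'.
    apply/setP => x; rewrite !inE negb_or.
    by case: (eqVneq x w) => [->|] //=; rewrite (negbTE wW').
  exact: dW'.
Qed.

Lemma final : Zplus_is e (#|T|%:Z - (cc e)%:Z)%R.
Proof.
split.
  have I0 : Inv set0.
    by split; [exact: sub0set | move=> p q; rewrite inE].
  have H0 : #|F :\: set0| = #|F| by rewrite setD0.
  case: (ub H0 I0) => W [cW _ dW].
  exists (~: W); split => //.
  have := cardsC W; rewrite ccF cW => H.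
  rewrite -H; move: #|F| #|~: W| => a b; clear; lia.
move=> B /lower H.
move: H; move: (cc e) #|T| #|B| => a b c; clear; lia.
Qed.
End Main.

Theorem mainTheorem7 (T : finType) (e : rel T)
  (e_sym : symmetric e) (e_irr : irreflexive e)
  (F : {set {set T}})
  (HF : minmax_clique_covering e F)
  (Hsimple : simple_intersection F)
  (Hcyc : ~ has_induced_long_cycle (ccg_vertex F) (@ccg_adj T)) :
  Zplus_is e (#|T|%:Z - (cc e)%:Z)%R.
Proof. exact: (final e_sym e_irr HF Hsimple Hcyc). Qed.
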